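(* Fix $0<\epsilon<1/(4L)$ where $L=33$. Let $A\in\mathbb{R}^{m\times n}$ satisfy the RRCP with respect to $G$ with constant $\epsilon$ and each $W_i\in\mathbb{R}^{n_i\times n_{i-1}}$ satisfy the WDC with constant $\epsilon$. Then for all $x,y\in\mathbb{R}^k\setminus\{0\}$, the angle $\theta_1:=\angle(A_{G(x)}G(x),A_{G(y)}G(y))$ is well-defined and $|\cos\theta_1-\cos\varphi(\theta_d)|\leqslant4L\epsilon$, where $\theta_d=\angle(G(x),G(y))$ and $\varphi(\theta):=\cos^{-1}\!\big(\frac{(\pi-2\theta)\cos\theta+2\sin\theta}{\pi}\big)$.
   Context: Network: $k=n_0<\dots<n_d=n$, $G(x)=\mathrm{relu}(W_d\cdots\mathrm{relu}(W_1x)\cdots)$. $W_{+,x}:=\mathrm{diag}(Wx>0)W$. $\theta_{x,y}=\angle(x,y)$, $\hat x=x/\|x\|$, $M_{\hat x\leftrightarrow\hat y}$ the symmetric matrix swapping $\hat x,\hat y$ and vanishing on $\mathrm{span}(x,y)^\perp$ ($\pm\hat x\hat x^\top$ in degenerate cases). WDC with constant $\epsilon$: $\|W_{+,x}^\top W_{+,y}-(\frac{\pi-\theta_{x,y}}{2\pi}I+\frac{\sin\theta_{x,y}}{2\pi}M_{\hat x\leftrightarrow\hat y})\|\leqslant\epsilon$ for all nonzero $x,y$. $A_z:=\mathrm{diag}(\mathrm{sgn}(Az))A$ ($\mathrm{sgn}(0)=0$); $\Phi_{z,w}=\frac{\pi-2\theta_{z,w}}{\pi}I_n+\frac{2\sin\theta_{z,w}}{\pi}M_{\hat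 z\leftrightarrow\hat w}$ for $z,w\neq0$, else $0$. RRCP with constant $\epsilon$: $|\langle(A_{G(x)}^\top A_{G(y)}-\Phi_{G(x),G(y)})(G(x_1)-G(x_2)),G(x_3)-G(x_4)\rangle|\leqslant L\epsilon\|G(x_1)-G(x_2)\|\|G(x_3)-G(x_4)\|$ for all $x,y,x_1,\dots,x_4$, $L=33$. *)

(* Defs.v *)
From mathcomp Require Import all_boot all_order all_algebra.
From mathcomp Require Import all_classical all_reals all_analysis.
Set Implicit Arguments. Unset Strict Implicit. Unset Printing Implicit Defensive.
Import Order.TTheory GRing.Theory Num.Theory.
Local Open Scope ring_scope.
Local Open Scope classical_set_scope.

Section Defs.
Variable R : realType.

Definition dotv (p : nat) (u v : 'cV[R]_p) : R := \sum_(i < p) u i 0 * v i 0.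
Definition enorm (p : nat) (u : 'cV[R]_p) : R := Num.sqrt (dotv u u).

Definition opnorm (p q : nat) (M : 'M[R]_(p, q)) : R :=
  sup [set enorm (M *m v) | v in [set v : 'cV[R]_q | enorm v <= 1]].

Definition angle (p : nat) (u v : 'cV[R]_p) : R :=
  acos (dotv u v / (enorm u * enorm v)).

Definition unitv (p : nat) (u : 'cV[R]_p) : 'cV[R]_p := (enorm u)^-1 *: u.

(* M_{\hat x <-> \hat y}: the symmetric matrix swapping \hat x and \hat y and
   vanishing on span(x,y)^perp; in the collinear case it is c * \hat x \hat x^T
   with c = <\hat x, \hat y> = +-1. *)
Definition swapmx (p : nat) (x y : 'cV[R]_p) : 'M[R]_p :=
  let a := unitv x in let b := unitv y in let c := dotv a b in
  if c ^+ 2 == 1 then c *: (a *m a^T)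
  else (1 - c ^+ 2)^-1 *: (a *m b^T + b *m a^T - c *: (a *m a^T + b *m b^T)).

Definition Wplus (p q : nat) (W : 'M[R]_(p, q)) (x : 'cV[R]_q) : 'M[R]_(p, q) :=
  diag_mx (\row_i (if 0 < (W *m x) i 0 then 1 else 0)) *m W.

Definition Asgn (m p : nat) (A : 'M[R]_(m, p)) (z : 'cV[R]_p) : 'M[R]_(m, p) :=
  diag_mx (\row_i Num.sg ((A *m z) i 0)) *m A.

Definition WDC (p q : nat) (W : 'M[R]_(p, q)) (eps : R) : Prop :=
  forall x y : 'cV[R]_q, x != 0 -> y != 0 ->
    opnorm ((Wplus W x)^T *m Wplus W y -
      (((pi - angle x y) / (2 * pi)) *: 1%:M
       + (sin (angle x y) / (2 * pi)) *: swapmx x y)) <= eps.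

Definition Phi (p : nat) (z w : 'cV[R]_p) : 'M[R]_p :=
  if (z != 0) && (w != 0) then
    ((pi - 2 * angle z w) / pi) *: 1%:M + (2 * sin (angle z w) / pi) *: swapmx z w
  else 0.

Definition relu (p : nat) (v : 'cV[R]_p) : 'cV[R]_p := map_mx (fun t => Num.max t 0) v.

(* the network: layer widths dims 0 = k, ..., dims d = n; weights
   W i : 'M_(dims i.+1, dims i) (the paper's W_{i+1}).  netG i x is the output
   after i layers; G = netG d. *)
Fixpoint netG (dims : nat -> nat) (W : forall i, 'M[R]_(dims i.+1, dims i))
    (i : nat) (x : 'cV[R]_(dims 0)) {struct i} : 'cV[R]_(dims i) :=
  match i return 'cV[R]_(dims i) with
  | 0 => x
  | i'.+1 => relu (W i' *m netG W i' x)
  end.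

Definition Lconst : R := 33%:R.

Definition RRCP (k m n : nat) (A : 'M[R]_(m, n)) (G : 'cV[R]_k -> 'cV[R]_n) (eps : R) : Prop :=
  forall x y x1 x2 x3 x4 : 'cV[R]_k,
    `| dotv (((Asgn A (G x))^T *m Asgn A (G y) - Phi (G x) (G y)) *m (G x1 - G x2))
            (G x3 - G x4) |
    <= Lconst * eps * enorm (G x1 - G x2) * enorm (G x3 - G x4).

Definition varphi (t : R) : R := acos (((pi - 2 * t) * cos t + 2 * sin t) / pi).

End Defs.

(* Main.v *)
Require Import Defs.
From mathcomp Require Import all_boot all_order all_algebra.
From mathcomp Require Import all_classical all_reals all_analysis.
From mathcomp Require Import ring lra.
Import Order.TTheory GRing.Theory Num.Theory numFieldNormedType.Exports.
Local Open Scope ring_scope.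
Local Open Scope classical_set_scope.
Set Implicit Arguments. Unset Strict Implicit.

Section H.
Variable R : realType.
Implicit Types (p : nat).

Lemma sin_le_id (t : R) : 0 <= t -> sin t <= t.
Proof.
move=> t0.
have [c _ E] : exists2 c, c \in `[0, t]%R & sin t - sin 0 = cos c * (t - 0).
  apply: (@MVT_segment R sin cos 0 t t0).
  exact/continuous_subspaceT/continuous_sin.

rewrite sin0 subr0 in E; rewrite E subr0.
by rewrite -[leRHS]mul1r ler_wpM2r // cos_le1.
Qed.

Lemma dotvE p (u v : 'cV[R]_p) : dotv u v = (u^T *m v) 0 0.
Proof. by rewrite /dotv mxE; apply: eq_bigr => i _; rewrite mxE. Qed.

Lemma dotvC p (u v : 'cV[R]_p) : dotv u v = dotv v u.
Proof. by rewrite /dotv; apply: eq_bigr => i _; rewrite mulrC. Qed.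

Lemma dotvDl p (u w v : 'cV[R]_p) : dotv (u + w) v = dotv u v + dotv w v.
Proof. by rewrite /dotv -big_split; apply: eq_bigr => i _; rewrite mxE mulrDl. Qed.

Lemma dotvZl p a (u v : 'cV[R]_p) : dotv (a *: u) v = a * dotv u v.
Proof. by rewrite /dotv mulr_sumr; apply: eq_bigr => i _; rewrite mxE mulrA. Qed.

Lemma dotvNl p (u v : 'cV[R]_p) : dotv (- u) v = - dotv u v.
Proof. by rewrite -scaleN1r dotvZl mulN1r. Qed.

Lemma dotvBl p (u w v : 'cV[R]_p) : dotv (u - w) v = dotv u v - dotv w v.
Proof. by rewrite dotvDl dotvNl. Qed.

Lemma dotvZr p a (u v : 'cV[R]_p) : dotv u (a *: v) = a * dotv u v.
Proof. by rewrite dotvC dotvZl dotvC. Qed.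

Lemma dotvDr p (u w v : 'cV[R]_p) : dotv v (u + w) = dotv v u + dotv v w.
Proof. by rewrite dotvC dotvDl !(dotvC v). Qed.

Lemma dotvBr p (u w v : 'cV[R]_p) : dotv v (u - w) = dotv v u - dotv v w.
Proof. by rewrite dotvC dotvBl !(dotvC v). Qed.

Lemma dotv0l p (v : 'cV[R]_p) : dotv 0 v = 0.
Proof. by rewrite -(scale0r 0) dotvZl mul0r. Qed.

Lemma dotv_mull p q (M : 'M[R]_(q, p)) (u : 'cV[R]_p) v :
  dotv (M *m u) v = dotv u (M^T *m v).
Proof. by rewrite !dotvE trmx_mul mulmxA. Qed.

Lemma dotv_ge0 p (u : 'cV[R]_p) : 0 <= dotv u u.
Proof. by apply: sumr_ge0 => i _; rewrite -expr2 sqr_ge0. Qed.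

Lemma dotv_gt0 p (u : 'cV[R]_p) : u != 0 -> 0 < dotv u u.
Proof.
move=> u0; rewrite lt_def dotv_ge0 andbT; apply: contra u0 => /eqP.
rewrite /dotv => /eqP; rewrite psumr_eq0 => [/allP H|i _]; last by rewrite -expr2 sqr_ge0.
apply/eqP/matrixP => i j; rewrite (ord1 j) mxE.
by have /(_ (mem_index_enum i)) := H i; rewrite implyTb -expr2 sqrf_eq0 => /eqP.
Qed.

Lemma enorm_ge0 p (u : 'cV[R]_p) : 0 <= enorm u.
Proof. exact: sqrtr_ge0. Qed.

Lemma enorm_sqr p (u : 'cV[R]_p) : enorm u ^+ 2 = dotv u u.
Proof. by rewrite /enorm sqr_sqrtr // dotv_ge0. Qed.

Lemma enorm_gt0 p (u : 'cV[R]_p) : u != 0 -> 0 < enorm u.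
Proof. by move=> /dotv_gt0; rewrite /enorm sqrtr_gt0. Qed.

Lemma enormZ p a (u : 'cV[R]_p) : enorm (a *: u) = `|a| * enorm u.
Proof.
by rewrite /enorm dotvZl dotvZr mulrA -expr2 sqrtrM ?sqr_ge0 // sqrtr_sqr.
Qed.

Lemma CS p (u v : 'cV[R]_p) : dotv u v ^+ 2 <= dotv u u * dotv v v.
Proof.
have [->|v0] := eqVneq v 0; first by rewrite dotvC !dotv0l expr0n mulr0.
have := dotv_ge0 (dotv v v *: u - dotv u v *: v).
rewrite dotvBl !dotvBr !dotvZl !dotvZr (dotvC v u) => H.
have vp := dotv_gt0 v0.
rewrite -subr_ge0. 
have : 0 <= dotv v v * (dotv u u * dotv v v - dotv u v ^+ 2) by
  move: H; congr (_ <= _); ring.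
by rewrite pmulr_rge0.
Qed.

Lemma CSn p (u v : 'cV[R]_p) : `|dotv u v| <= enorm u * enorm v.
Proof.
rewrite -ler_sqr ?nnegrE ?mulr_ge0 ?enorm_ge0 //.
by rewrite real_normK ?num_real // exprMn !enorm_sqr CS.
Qed.


Lemma enorm0 p : enorm (0 : 'cV[R]_p) = 0.
Proof. by rewrite /enorm dotv0l sqrtr0. Qed.

Lemma enorm_neq0 p (u : 'cV[R]_p) : 0 < enorm u -> u != 0.
Proof. by apply: contraTneq => ->; rewrite enorm0 ltxx. Qed.

Lemma cos_angle p (u v : 'cV[R]_p) : u != 0 -> v != 0 ->
  cos (angle u v) = dotv u v / (enorm u * enorm v).
Proof.
move=> u0 v0; rewrite /angle acosK // in_itv /= -ler_norml.
have up := enorm_gt0 u0; have vp := enorm_gt0 v0.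
rewrite normrM normfV (gtr0_norm (mulr_gt0 up vp)) ler_pdivrMr ?mulr_gt0 // mul1r.
exact: CSn.
Qed.

Lemma angle_in p (u v : 'cV[R]_p) : u != 0 -> v != 0 ->
  0 <= angle u v <= pi.
Proof.
move=> u0 v0; have up := enorm_gt0 u0; have vp := enorm_gt0 v0.
have H : -1 <= dotv u v / (enorm u * enorm v) <= 1.
  rewrite -ler_norml normrM normfV (gtr0_norm (mulr_gt0 up vp)).
  by rewrite ler_pdivrMr ?mulr_gt0 // mul1r CSn.
by rewrite /angle acos_ge0 // acos_lepi.
Qed.

Lemma angle_self p (u : 'cV[R]_p) : u != 0 -> angle u u = 0.
Proof.
move=> u0; rewrite /angle -expr2 enorm_sqr divff ?acos1 //.
by rewrite gt_eqF // dotv_gt0.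
Qed.

Lemma dotv_unitv p (u v : 'cV[R]_p) : dotv (unitv u) v = dotv u v / enorm u.
Proof. by rewrite /unitv dotvZl mulrC. Qed.

Lemma unitv_dot p (u : 'cV[R]_p) : u != 0 -> dotv (unitv u) (unitv u) = 1.
Proof.
move=> u0; have up := enorm_gt0 u0.
rewrite dotv_unitv /unitv dotvZr -enorm_sqr; field.
by rewrite gt_eqF.
Qed.

Lemma unitvK p (u : 'cV[R]_p) : u != 0 -> enorm u *: unitv u = u.
Proof.
move=> u0; rewrite /unitv scalerA divff ?scale1r //.
by rewrite gt_eqF // enorm_gt0.
Qed.

Lemma outer_mul p (a b c : 'cV[R]_p) : (a *m b^T) *m c = dotv b c *: a.
Proof.
rewrite -mulmxA [b^T *m c]mx11_scalar -dotvE.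
by rewrite mul_mx_scalar.
Qed.

Lemma swapmx_unit p (x y : 'cV[R]_p) : x != 0 -> y != 0 ->
  swapmx x y *m unitv y = unitv x.
Proof.
move=> x0 y0; rewrite /swapmx.
set a := unitv x; set b := unitv y; set c := dotv a b.
have bb : dotv b b = 1 by exact: unitv_dot.
case: ifP => [/eqP c2|c2].
  rewrite -scalemxAl outer_mul -/c scalerA -expr2 c2 scale1r //.
rewrite -scalemxAl (mulmxBl (a *m b^T + b *m a^T)) (mulmxDl (a *m b^T)) -(scalemxAl c) (mulmxDl (a *m a^T)) !outer_mul bb -/c.
rewrite ?(dotvC b a) -/c.
have c2' : 1 - c ^+ 2 != 0 by rewrite subr_eq0 eq_sym c2.
apply/matrixP => i j; rewrite !mxE.
clearbody a b c; move: (x i j) (y i j) ((enorm x)^-1) ((enorm y)^-1) c2' => X Y ex ey h; by field.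
Qed.

Lemma Phi_dot p (x y : 'cV[R]_p) : x != 0 -> y != 0 ->
  dotv (Phi x y *m y) x = enorm x * enorm y *
    (((pi - 2 * angle x y) * cos (angle x y) + 2 * sin (angle x y)) / pi).
Proof.
move=> x0 y0; rewrite /Phi x0 y0 /=.
have E : swapmx x y *m y = enorm y *: unitv x by rewrite -(swapmx_unit x0 y0) // scalemxAr unitvK.
rewrite mulmxDl -!scalemxAl mul1mx E.
rewrite dotvDl !dotvZl (dotvC y x).
have xp := enorm_gt0 x0; have yp := enorm_gt0 y0.
have -> : dotv x y = cos (angle x y) * (enorm x * enorm y).
  by rewrite cos_angle // divfK // mulf_neq0 // gt_eqF.
rewrite -enorm_sqr.
have pi0 : pi != 0 :> R by rewrite gt_eqF // pi_gt0.
have ex : enorm x != 0 by rewrite gt_eqF.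
move: (enorm x) (enorm y) (angle x y) (pi : R) pi0 ex => X Y T P h1 h2.
by field; rewrite ?h1 ?h2.
Qed.

Lemma Phi_self p (x : 'cV[R]_p) : x != 0 -> Phi x x = 1%:M.
Proof.
move=> x0; rewrite /Phi x0 /= angle_self // sin0 mulr0 mul0r scale0r addr0.
by rewrite subr0 divff ?scale1r // gt_eqF // pi_gt0.
Qed.

Lemma opnorm_le p q (M : 'M[R]_(p, q)) e v :
  opnorm M <= e -> enorm (M *m v) <= e * enorm v.
Proof.
move=> Me.
have [->|v0] := eqVneq v 0; first by rewrite mulmx0 !enorm0 mulr0.
set S := [set enorm (M *m w) | w in [set w : 'cV[R]_q | enorm w <= 1]].
have hS : has_sup S.
  split; first by exists (enorm (M *m 0)), 0 => //=; rewrite enorm0.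
  exists (Num.sqrt (\sum_i dotv (\col_j M i j) (\col_j M i j))) => _ [w /= w1 <-].
  rewrite /enorm ler_sqrt; last by apply: sumr_ge0 => i _; exact: dotv_ge0.
  have ww : dotv w w <= 1.
    by rewrite -enorm_sqr; have := enorm_ge0 w; nra.
  rewrite [X in X <= _]/dotv; apply: ler_sum => i _.
  have -> : (M *m w) i 0 = dotv (\col_j M i j) w.
    by rewrite mxE /dotv; apply: eq_bigr => j _; rewrite mxE.
  rewrite -expr2; apply: (le_trans (CS _ _)).
  by rewrite -[leRHS]mulr1 ler_wpM2l // dotv_ge0.
have vp := enorm_gt0 v0.
have : enorm (M *m ((enorm v)^-1 *: v)) \in S.
  rewrite inE; exists ((enorm v)^-1 *: v) => //=.
  by rewrite enormZ normfV gtr0_norm // mulVf // gt_eqF.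
rewrite inE => /(sup_upper_bound hS) H.
have := le_trans H Me.
by rewrite -scalemxAr enormZ normfV gtr0_norm // mulrC ler_pdivrMr.
Qed.


Lemma relu_Wplus p q (W : 'M[R]_(p, q)) x : relu (W *m x) = Wplus W x *m x.
Proof.
rewrite /Wplus -mulmxA mul_diag_mx; apply/matrixP => i j; rewrite (ord1 j) !mxE.
case: ifP => [h|/negbT h]; first by rewrite mul1r max_l // ltW.
by rewrite mul0r max_r // leNgt.
Qed.

Lemma netG0 (dims : nat -> nat) (W : forall i, 'M[R]_(dims i.+1, dims i)) i :
  netG W i 0 = 0.
Proof.
elim: i => //= i ->; rewrite mulmx0; apply/matrixP => a b; rewrite !mxE.
by rewrite maxxx.
Qed.

Lemma WDC_neq0 p q (W : 'M[R]_(p, q)) eps z : WDC W eps -> eps < 1 / 2 ->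
  z != 0 -> Wplus W z *m z != 0.
Proof.
move=> H e2 z0; have := opnorm_le z (H z z z0 z0).
rewrite angle_self // sin0 mul0r scale0r addr0 subr0 => Hn.
set P := Wplus W z in Hn *.
have pi0 : pi != 0 :> R by rewrite gt_eqF // pi_gt0.
have E2 : pi / (2 * pi) = 1 / 2 :> R.
  by move: (pi : R) pi0 => P0 h; field; rewrite ?h.
rewrite E2 in Hn.
have Hc := CSn ((P^T *m P - (1 / 2) *: 1%:M) *m z) z.
have Ed : dotv ((P^T *m P - (1 / 2) *: 1%:M) *m z) z
    = dotv (P *m z) (P *m z) - 1 / 2 * dotv z z.
  by rewrite mulmxBl dotvBl -mulmxA (dotv_mull P^T) trmxK -scalemxAl mul1mx dotvZl.
rewrite Ed in Hc.
have zp := enorm_gt0 z0.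
apply/negP => /eqP P0; move: Hc; rewrite P0 dotv0l add0r normrN.
rewrite normrM -enorm_sqr ger0_norm // => Hc.
have := le_trans Hc (ler_wpM2r (enorm_ge0 z) Hn).
rewrite ger0_norm ?exprn_ge0 ?enorm_ge0 // => H2.
have zz : 0 < enorm z * enorm z by exact: mulr_gt0.
nra.
Qed.

Lemma netG_neq0 (d : nat) (dims : nat -> nat) (W : forall i, 'M[R]_(dims i.+1, dims i)) eps x :
  (forall i, (i < d)%N -> WDC (W i) eps) -> eps < 1 / 2 -> x != 0 ->
  forall i, (i <= d)%N -> netG W i x != 0.
Proof.
move=> HW e2 x0; elim => //= i IH id.
rewrite relu_Wplus; apply: (WDC_neq0 (HW i id) e2).
by apply: IH; exact: ltnW.
Qed.

Lemma sin_pi_minus (t : R) : sin (pi - t) = sin t.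
Proof. by rewrite sinB sinpi cospi mul0r sub0r mulN1r opprK. Qed.

Lemma cphi_bound (t : R) : 0 <= t <= pi ->
  -1 <= ((pi - 2 * t) * cos t + 2 * sin t) / pi <= 1.
Proof.
move=> /andP[t0 tp].
have pp := pi_gt0 R.
have s0 : 0 <= sin t by apply: sin_ge0_pi; rewrite t0 tp.
have s1 : sin t <= t := sin_le_id t0.
have s2 : sin t <= pi - t by rewrite -sin_pi_minus sin_le_id // subr_ge0.
have c1 := cos_le1 t; have c2 := cos_geN1 t.
rewrite ler_pdivlMr // ler_pdivrMr //.
have [h|h] := lerP t (pi / 2).
- have h1 : 0 <= (pi - 2 * t) * (1 - cos t) by apply: mulr_ge0; lra.
  have h2 : 0 <= (pi - 2 * t) * (1 + cos t) by apply: mulr_ge0; lra.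
  apply/andP; split; nra.
- have h1 : 0 <= (2 * t - pi) * (1 - cos t) by apply: mulr_ge0; lra.
  have h2 : 0 <= (2 * t - pi) * (1 + cos t) by apply: mulr_ge0; lra.
  apply/andP; split; nra.
Qed.

Lemma final_ineq (a b U V p c dl : R) : 0 < a -> 0 < b -> 0 <= U -> 0 <= V ->
  0 <= dl -> dl < 1 / 4 ->
  `|U ^+ 2 - a ^+ 2| <= dl * a * a -> `|V ^+ 2 - b ^+ 2| <= dl * b * b ->
  `|p - c * (a * b)| <= dl * b * a -> `|c| <= 1 ->
  [/\ 0 < U, 0 < V & `|p / (U * V) - c| <= 4 * dl].
Proof.
move=> a0 b0 U0 V0 d0 d4 hU hV hp hc.
move: hU; rewrite ler_norml => /andP[hU1 hU2].
move: hV; rewrite ler_norml => /andP[hV1 hV2].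
move: hp; rewrite ler_norml => /andP[hp1 hp2].
have ab := mulr_gt0 a0 b0.
have Up : 0 < U.
  rewrite lt_def U0 andbT; apply/eqP => U00; move: hU1; rewrite U00; nra.
have Vp : 0 < V.
  rewrite lt_def V0 andbT; apply/eqP => V00; move: hV1; rewrite V00; nra.
have hU2' : U ^+ 2 <= (1 + dl) * a ^+ 2 by rewrite expr2; lra.
have hV2' : V ^+ 2 <= (1 + dl) * b ^+ 2 by rewrite expr2; lra.
have hU1' : (1 - dl) * a ^+ 2 <= U ^+ 2 by rewrite expr2; lra.
have hV1' : (1 - dl) * b ^+ 2 <= V ^+ 2 by rewrite expr2; lra.
have hq2 : (U * V) ^+ 2 <= ((1 + dl) * (a * b)) ^+ 2.
  have := ler_pM (exprn_ge0 2 U0) (exprn_ge0 2 V0) hU2' hV2'.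
  move=> h; rewrite [leLHS]exprMn; apply: (le_trans h); rewrite le_eqVlt; apply/orP; left; apply/eqP; ring.
have hq1 : ((1 - dl) * (a * b)) ^+ 2 <= (U * V) ^+ 2.
  have h1 : 0 <= (1 - dl) * a ^+ 2 by rewrite mulr_ge0 ?exprn_ge0 //; lra.
  have h2 : 0 <= (1 - dl) * b ^+ 2 by rewrite mulr_ge0 ?exprn_ge0 //; lra.
  have := ler_pM h1 h2 hU1' hV1'.
  move=> h; rewrite [leRHS]exprMn; apply: le_trans h; rewrite le_eqVlt; apply/orP; left; apply/eqP; ring.
move: hq1 hq2; rewrite !ler_sqr ?nnegrE ?mulr_ge0 //; try lra.
move=> q1 q2.
have qp : 0 < U * V by exact: mulr_gt0.
have -> : p / (U * V) - c = (p - c * (U * V)) / (U * V).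
  by move: Up Vp => h1 h2; field; rewrite ?gt_eqF // ?mulr_gt0.
split => //.
rewrite normrM normfV (gtr0_norm qp) ler_pdivrMr //.
have hc' : -1 <= c <= 1 by rewrite -ler_norml.
move: hc' => /andP[c1 c2].
rewrite -(mulrA dl b a) (mulrC b a) in hp1 hp2.
set q := U * V in q1 q2 qp *; set r := a * b in q1 q2 ab hp1 hp2 *.
have e1 : 0 <= (1 - c) * (r - q + dl * r) by apply: mulr_ge0; lra.
have e2 : 0 <= (1 + c) * (r - q + dl * r) by apply: mulr_ge0; lra.
have e3 : 0 <= (1 - c) * (q - r + dl * r) by apply: mulr_ge0; lra.
have e4 : 0 <= (1 + c) * (q - r + dl * r) by apply: mulr_ge0; lra.
have e5 : 0 <= dl * (q - (1 - dl) * r) by apply: mulr_ge0; lra.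
have e6 : 0 <= dl * r * (1 / 4 - dl) by rewrite mulr_ge0 ?mulr_ge0 //; lra.
rewrite ler_norml; apply/andP; split; nra.
Qed.

End H.

Unset Implicit Arguments.
Set Strict Implicit.

Theorem lemma15 (R : realType) (eps : R) (d m : nat) (dims : nat -> nat)
    (W : forall i, 'M[R]_(dims i.+1, dims i)) (A : 'M[R]_(m, dims d)) :
  0 < eps -> eps < 1 / (4 * Lconst R) ->
  (forall i, (i < d)%N -> (dims i < dims i.+1)%N) ->
  (forall i, (i < d)%N -> WDC (W i) eps) ->
  RRCP A (netG W d) eps ->
  forall x y : 'cV[R]_(dims 0), x != 0 -> y != 0 ->
    let Gx := netG W d x in let Gy := netG W d y in
    Asgn A Gx *m Gx != 0 /\ Asgn A Gy *m Gy != 0 /\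
    `| cos (angle (Asgn A Gx *m Gx) (Asgn A Gy *m Gy)) - cos (varphi (angle Gx Gy)) |
      <= 4 * Lconst R * eps.
Proof.
move=> e0 eL _ HW HR x y x0 y0 Gx Gy.
have LE : Lconst R = 33 by [].
rewrite LE in eL *.
have e2 : eps < 1 / 2.
  by move: eL; rewrite ltr_pdivlMr // => h; lra.
have gx : Gx != 0 := netG_neq0 HW e2 x0 (leqnn d).
have gy : Gy != 0 := netG_neq0 HW e2 y0 (leqnn d).
have G0 : netG W d 0 = 0 := netG0 W d.
have Hself : forall z, netG W d z != 0 ->
    `|enorm (Asgn A (netG W d z) *m netG W d z) ^+ 2 - enorm (netG W d z) ^+ 2|
    <= 33 * eps * enorm (netG W d z) * enorm (netG W d z).
  move=> z gz; have := HR z z z 0 z 0; rewrite /Lconst G0 !subr0 Phi_self //.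
  rewrite mulmxBl mul1mx dotvBl -mulmxA (dotv_mull (Asgn A _)^T) trmxK.
  by rewrite !enorm_sqr.
have Hx := Hself x gx; have Hy := Hself y gy.
have Hc := HR x y y 0 x 0.
rewrite /Lconst G0 !subr0 mulmxBl dotvBl Phi_dot // -mulmxA in Hc.
rewrite (dotv_mull (Asgn A _)^T) trmxK in Hc.
set c := ((pi - 2 * angle Gx Gy) * cos (angle Gx Gy) + 2 * sin (angle Gx Gy)) / pi in Hc.
have cb : -1 <= c <= 1 by apply: cphi_bound; exact: angle_in.
have [U0 V0 Hf] := @final_ineq R (enorm Gx) (enorm Gy)
  (enorm (Asgn A Gx *m Gx)) (enorm (Asgn A Gy *m Gy))
  (dotv (Asgn A Gx *m Gx) (Asgn A Gy *m Gy)) c (33 * eps)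
  (enorm_gt0 gx) (enorm_gt0 gy) (enorm_ge0 _) (enorm_ge0 _)
  (ltW (mulr_gt0 (ltr0Sn R 32) e0)) ltac:(move: eL; rewrite ltr_pdivlMr // => h; lra)
  Hx Hy ltac:(by rewrite dotvC mulrC) ltac:(by rewrite ler_norml).
have u0 := enorm_neq0 U0; have v0 := enorm_neq0 V0.
split => //; split => //.
rewrite cos_angle // /varphi acosK ?in_itv //.
by rewrite -mulrA.
Qed.
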